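(* For integers $r,k\ge0$ and real $\alpha$ with $\alpha>k>r$, $$\sum_{n=1}^\infty\frac{H_{n+\alpha}^2}{(n+r)(n+k)}=\frac1{k-r}\Bigg\{H_{\alpha-r}^3+H_{\alpha-r}H_{\alpha-r}^{(2)}+H_{\alpha-r}\zeta(2)-H_{\alpha-k}^3-H_{\alpha-k}H_{\alpha-k}^{(2)}-H_{\alpha-k}\zeta(2)$$ $$+(r-\alpha)\sum_{j=1}^r\frac{H_{\alpha+j-r}^2}{j(\alpha+j-r)}+\sum_{j=1}^{k-r}\frac{H_{\alpha+j-k}}{(\alpha+j-k)^2}-(k-\alpha)\sum_{j=1}^k\frac{H_{\alpha+j-k}^2}{j(\alpha+j-k)}\Bigg\}.$$
   Context: Shifted harmonic numbers: for a real $\alpha$ that is not a negative integer, $H_\alpha := \sum_{k=1}^\infty\left(\frac1k-\frac1{k+\alpha}\right)$ and, for integers $m\ge 2$, $H_\alpha^{(m)} := \sum_{k=1}^\infty\left(\frac1{k^m}-\frac1{(k+\alpha)^m}\right)=\zeta(m)-\zeta(m,\alpha+1)$, where $\zeta$ is the Riemann zeta function and $\zeta(s,\alpha+1)=\sum_{n=1}^\infty (n+\alpha)^{-s}$ is the Hurwitz zeta function. Powers such as $H_\alpha^2$ mean $(H_\alpha)^2$. Empty sums are $0$. *)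

(* Defs.v *)
From Stdlib Require Import Reals Lra Lia ClassicalEpsilon.
Open Scope R_scope.

(* The sum of a series sum_{k>=0} f k: the limit of the partial sums, chosen by
   Hilbert's epsilon (it is the unique limit whenever the series converges). *)
Definition series (f : nat -> R) : R :=
  epsilon (inhabits 0) (fun l => infinite_sum f l).

Definition H (a : R) : R :=
  series (fun k => / INR (S k) - / (INR (S k) + a)).

Definition Hm (m : nat) (a : R) : R :=
  series (fun k => / (INR (S k)) ^ m - / (INR (S k) + a) ^ m).

Definition zeta (m : nat) : R := series (fun k => / (INR (S k)) ^ m).

Fixpoint fsum1 (n : nat) (f : nat -> R) : R :=
  match n with
  | O => 0
  | S p => fsum1 p f + f (S p)
  end.

(* Main.v *)
Require Import Defs.
From Stdlib Require Import Reals Lra Lia ZArith ClassicalEpsilon.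
From Coquelicot Require Import Coquelicot.
Open Scope R_scope.

Lemma series_eq f l : infinite_sum f l -> series f = l.
Proof.
  intro Hf. unfold series.
  assert (E := epsilon_spec (inhabits 0) (fun l => infinite_sum f l) (ex_intro _ l Hf)).
  exact (uniqueness_sum _ _ _ E Hf).
Qed.

Lemma sum_fsum1 g n : sum_f_R0 (fun k => g (S k)) n = fsum1 (S n) g.
Proof. induction n; simpl; [ring|]. rewrite IHn. reflexivity. Qed.

Definition cvs (g : nat -> R) (l : R) := is_lim_seq (fun M => fsum1 M g) l.

Lemma cvs_inf g l : cvs g l -> infinite_sum (fun k => g (S k)) l.
Proof.
  intro H0. apply is_lim_seq_Reals. apply is_lim_seq_incr_1 in H0.
  eapply is_lim_seq_ext; [|exact H0]. intro n; simpl. now rewrite sum_fsum1.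
Qed.

Lemma inf_cvs g l : infinite_sum (fun k => g (S k)) l -> cvs g l.
Proof.
  intro H0. apply is_lim_seq_Reals in H0. unfold cvs. apply is_lim_seq_incr_1.
  eapply is_lim_seq_ext; [|exact H0]. intro n; simpl. now rewrite sum_fsum1.
Qed.

Lemma lim_uniq u (l1 l2 : R) : is_lim_seq u l1 -> is_lim_seq u l2 -> l1 = l2.
Proof.
  intros A B. apply is_lim_seq_unique in A. apply is_lim_seq_unique in B.
  rewrite A in B. now injection B.
Qed.

Lemma fsum1_ge0 g n : (forall m, 0 <= g m) -> 0 <= fsum1 n g.
Proof. intro Hg; induction n; simpl; [lra|]. specialize (Hg (S n)); lra. Qed.

Lemma fsum1_le g h n : (forall m, g m <= h m) -> fsum1 n g <= fsum1 n h.
Proof. intro Hg; induction n; simpl; [lra|]. specialize (Hg (S n)); lra. Qed.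

Lemma fsum1_ext g h n : (forall m, (1 <= m)%nat -> g m = h m) -> fsum1 n g = fsum1 n h.
Proof. intro Hg; induction n; simpl; [lra|]. rewrite IHn, Hg; [reflexivity|lia]. Qed.

Lemma cvs_bounded g B : (forall m, (1<=m)%nat -> 0 <= g m) -> (forall n, fsum1 n g <= B) ->
  exists l, cvs g l.
Proof.
  intros Hg HB.
  destruct (growing_cv (fun n => fsum1 n g)) as [l Hl].
  - intro n. simpl. specialize (Hg (S n) ltac:(lia)). lra.
  - exists B. intros x [n ->]. apply HB.
  - exists l. now apply is_lim_seq_Reals.
Qed.

Lemma cvs_le_lim g l n : (forall m, (1<=m)%nat -> 0 <= g m) -> cvs g l -> fsum1 n g <= l.
Proof.
  intros Hg Hl.
  assert (Rbar_le (fsum1 n g) l).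
  { apply (is_lim_seq_le (fun _ => fsum1 n g) (fun M => fsum1 (M + n) g)); [|apply is_lim_seq_const|].
    - intro M. induction M; simpl; [lra|]. specialize (Hg (S (M+n)) ltac:(lia)); lra.
    - now apply (is_lim_seq_incr_n (fun M => fsum1 M g)). }
  exact H.
Qed.

Lemma fsum1_S n g : fsum1 (S n) g = fsum1 n g + g (S n).
Proof. reflexivity. Qed.

Lemma INR_S1 m : (1 <= m)%nat -> 1 <= INR m.
Proof. intro; apply (le_INR 1); lia. Qed.

Lemma sum_inv_sq n : fsum1 n (fun m => / INR m ^ 2) <= 2.
Proof.
  assert (forall n, (1 <= n)%nat -> fsum1 n (fun m => / INR m ^ 2) <= 2 - / INR n).
  { induction n0; intro Hn; [lia|]. destruct n0.
    - simpl. lra.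
    - assert (IH := IHn0 ltac:(lia)). rewrite fsum1_S; cbv beta.
      rewrite S_INR. set (x := INR (S n0)) in *. assert (1 <= x) by (apply INR_S1; lia).
      assert (/ (x+1)^2 + / (x+1) <= / x).
      { apply (Rmult_le_reg_r (x * (x+1)^2)); [nra|].
        field_simplify; [lra|lra|lra]. }
      lra. }
  destruct n; [simpl; lra|]. specialize (H (S n) ltac:(lia)).
  assert (0 < / INR (S n)) by (apply Rinv_0_lt_compat, lt_0_INR; lia). lra.
Qed.

Lemma aux32 a b : 1 <= a -> a <= b -> a*a + 1 = b*b -> / (b*b * b) <= 2 / a - 2 / b.
Proof.
intros H H0 E.
assert (P : 0 < a*b) by nra.
assert (Q : 2/a - 2/b = 2 * (b - a) / (a*b)) by (field; lra).
rewrite Q.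
apply (Rmult_le_reg_r (b*b*b * (a*b))); [repeat apply Rmult_lt_0_compat; lra|].
field_simplify; try lra.
assert (F: (b-a)*(a+b) = 1) by nra.
assert (G: a*b*(a+b) <= 2*(b*b*b)) by nra.
nra.
Qed.

Lemma sum_inv_32 n : fsum1 n (fun m => / (INR m * sqrt (INR m))) <= 3.
Proof.
  assert (forall n, (1 <= n)%nat -> fsum1 n (fun m => / (INR m * sqrt (INR m))) <= 3 - 2 / sqrt (INR n)).
  { induction n0; intro Hn; [lia|]. destruct n0.
    - simpl. rewrite Rplus_0_l, sqrt_1. lra.
    - assert (IH := IHn0 ltac:(lia)). rewrite fsum1_S; cbv beta.
      rewrite (S_INR (S n0)). set (x := INR (S n0)) in *. assert (1 <= x) by (apply INR_S1; lia).
      assert (Ha : 1 <= sqrt x) by (rewrite <- sqrt_1; apply sqrt_le_1_alt; lra).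
      assert (Hb : sqrt x <= sqrt (x+1)) by (apply sqrt_le_1_alt; lra).
      assert (Ea : sqrt x * sqrt x = x) by (apply sqrt_sqrt; lra).
      assert (Eb : sqrt (x+1) * sqrt (x+1) = x+1) by (apply sqrt_sqrt; lra).
      set (a := sqrt x) in *. set (b := sqrt (x+1)) in *.
      assert (/ ((x+1) * b) <= 2 / a - 2 / b).
      { rewrite <- Eb. apply aux32; lra. }
      lra. }
  destruct n; [simpl; lra|]. specialize (H (S n) ltac:(lia)).
  assert (0 < 2 / sqrt (INR (S n))).
  { apply Rdiv_lt_0_compat; [lra|]. apply sqrt_lt_R0, lt_0_INR; lia. }
  lra.
Qed.

Lemma fsum1_le1 g h n : (forall m, (1<=m)%nat -> g m <= h m) -> fsum1 n g <= fsum1 n h.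
Proof. intro Hg; induction n; simpl; [lra|]. specialize (Hg (S n) ltac:(lia)); lra. Qed.

Lemma fsum1_scal C h n : fsum1 n (fun m => C * h m) = C * fsum1 n h.
Proof. induction n; simpl; [ring|]. rewrite IHn; ring. Qed.

Lemma cvs_comp g h C B : 0 <= C -> (forall m, (1<=m)%nat -> 0 <= g m) -> (forall m, (1<=m)%nat -> g m <= C * h m) ->
  (forall n, fsum1 n h <= B) -> exists l, cvs g l.
Proof.
  intros HC Hg Hgh HB. apply (cvs_bounded g (C * B)); [exact Hg|].
  intro n. eapply Rle_trans; [apply (fsum1_le1 _ _ n Hgh)|]. rewrite fsum1_scal.
  apply Rmult_le_compat_l; auto.
Qed.

Lemma INR_pos1 m : (1 <= m)%nat -> 0 < INR m.
Proof. intro; apply lt_0_INR; lia. Qed.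

Lemma lim_inv_lin c : 0 < c -> is_lim_seq (fun M => / (INR M + c)) 0.
Proof.
  intro Hc. assert (Rbar_inv p_infty = 0) by reflexivity.
  rewrite <- H. apply is_lim_seq_inv; [|discriminate].
  apply (is_lim_seq_le_p_loc INR); [|apply is_lim_seq_INR].
  exists O. intros; lra.
Qed.

Lemma lim_le u v (l1 l2 : R) : (forall n, u n <= v n) -> is_lim_seq u l1 -> is_lim_seq v l2 -> l1 <= l2.
Proof. intros A B C. exact (is_lim_seq_le u v l1 l2 A B C). Qed.

Definition Hterm a m := / INR m - / (INR m + a).
Definition H2term a m := / INR m ^ 2 - / (INR m + a) ^ 2.

Lemma Hterm_bd a m : 0 <= a -> (1 <= m)%nat -> 0 <= Hterm a m <= a * / INR m ^ 2.
Proof.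
  intros Ha Hm. unfold Hterm. assert (P := INR_pos1 m Hm). set (x := INR m) in *.
  replace (/ x - / (x + a)) with (a / (x * (x+a))) by (field; lra).
  split.
  - apply Rdiv_le_0_compat; nra.
  - unfold Rdiv. apply Rmult_le_compat_l; [lra|]. apply Rinv_le_contravar; nra.
Qed.

Lemma H2term_bd a m : 0 <= a -> (1 <= m)%nat -> 0 <= H2term a m <= 1 * / INR m ^ 2.
Proof.
  intros Ha Hm. unfold H2term. assert (P := INR_pos1 m Hm). set (x := INR m) in *.
  assert (/ (x+a)^2 <= / x^2) by (apply Rinv_le_contravar; nra).
  assert (0 < / (x+a)^2) by (apply Rinv_0_lt_compat; nra). lra.
Qed.

Lemma H_cvs a : 0 <= a -> cvs (Hterm a) (H a).
Proof.
  intro Ha. destruct (cvs_comp (Hterm a) (fun m => / INR m ^ 2) a 2) as [l Hl]; auto.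
  - intros m Hm; apply Hterm_bd; auto.
  - intros; apply Hterm_bd; auto.
  - intro; apply sum_inv_sq.
  - unfold H. rewrite (series_eq _ l); auto. apply (cvs_inf (Hterm a)); auto.
Qed.

Lemma Hm2_cvs a : 0 <= a -> cvs (H2term a) (Hm 2 a).
Proof.
  intro Ha. destruct (cvs_comp (H2term a) (fun m => / INR m ^ 2) 1 2) as [l Hl]; auto; try lra.
  - intros m Hm; apply H2term_bd; auto.
  - intros; apply H2term_bd; auto.
  - intro; apply sum_inv_sq.
  - unfold Hm. rewrite (series_eq _ l); auto. apply (cvs_inf (H2term a)); auto.
Qed.

Lemma zeta2_cvs : cvs (fun m => / INR m ^ 2) (zeta 2).
Proof.
  destruct (cvs_comp (fun m => / INR m ^ 2) (fun m => / INR m ^ 2) 1 2) as [l Hl]; auto; try lra.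
  - intros m Hm. left. apply Rinv_0_lt_compat. apply pow_lt. apply INR_pos1; lia.
  - intros; lra.
  - intro; apply sum_inv_sq.
  - unfold zeta. rewrite (series_eq _ l); auto. apply (cvs_inf (fun m => / INR m ^ 2)); auto.
Qed.

Lemma H_shift a : 0 <= a -> H (a + 1) = H a + / (a + 1).
Proof.
  intro Ha.
  assert (E : forall M, fsum1 M (Hterm (a+1)) = fsum1 M (Hterm a) + (/ (a+1) - / (INR M + (a+1)))).
  { induction M; simpl fsum1. simpl. field. lra.
    rewrite IHM. unfold Hterm. rewrite S_INR.
    assert (0 <= INR M) by apply pos_INR. field. repeat split; lra. }
  apply (lim_uniq (fun M => fsum1 M (Hterm (a+1)))). apply H_cvs; lra.
  eapply is_lim_seq_ext. intro M; symmetry; apply E.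
  replace (H a + / (a+1)) with (H a + (/ (a+1) - 0)) by ring.
  apply is_lim_seq_plus'. apply H_cvs; auto.
  apply is_lim_seq_minus'. apply is_lim_seq_const. apply lim_inv_lin; lra.
Qed.

Lemma Hm2_shift a : 0 <= a -> Hm 2 (a + 1) = Hm 2 a + / (a + 1) ^ 2.
Proof.
  intro Ha.
  assert (E : forall M, fsum1 M (H2term (a+1)) = fsum1 M (H2term a) + (/ (a+1)^2 - / (INR M + (a+1)) * / (INR M + (a+1)))).
  { induction M; simpl fsum1. simpl. field. lra.
    rewrite IHM. unfold H2term. rewrite S_INR.
    assert (0 <= INR M) by apply pos_INR. field. repeat split; lra. }
  apply (lim_uniq (fun M => fsum1 M (H2term (a+1)))). apply Hm2_cvs; lra.
  eapply is_lim_seq_ext. intro M; symmetry; apply E.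
  replace (Hm 2 a + / (a+1)^2) with (Hm 2 a + (/ (a+1)^2 - 0 * 0)) by ring.
  apply is_lim_seq_plus'. apply Hm2_cvs; auto.
  apply is_lim_seq_minus'. apply is_lim_seq_const. apply is_lim_seq_mult'; apply lim_inv_lin; lra.
Qed.

Lemma cvs_ge0 g l : (forall m, (1<=m)%nat -> 0 <= g m) -> cvs g l -> 0 <= l.
Proof.
  intros Hg Hl. apply (lim_le (fun _ => 0) (fun M => fsum1 M g)); auto.
  - intro n. induction n; simpl; [lra|]. specialize (Hg (S n) ltac:(lia)); lra.
  - apply is_lim_seq_const.
Qed.

Lemma cvs_mono g h l1 l2 : (forall m, (1<=m)%nat -> g m <= h m) -> cvs g l1 -> cvs h l2 -> l1 <= l2.
Proof.
  intros Hg A B. apply (lim_le _ _ _ _ (fun n => fsum1_le1 g h n Hg) A B).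
Qed.

Lemma H_ge0 a : 0 <= a -> 0 <= H a.
Proof. intro Ha. apply (cvs_ge0 (Hterm a)). intros; apply Hterm_bd; auto. apply H_cvs; auto. Qed.

Lemma Hm2_ge0 a : 0 <= a -> 0 <= Hm 2 a.
Proof. intro Ha. apply (cvs_ge0 (H2term a)). intros; apply H2term_bd; auto. apply Hm2_cvs; auto. Qed.

Lemma H_mono a b : 0 <= a <= b -> H a <= H b.
Proof.
  intro Hab. apply (cvs_mono (Hterm a) (Hterm b)); try apply H_cvs; try lra.
  intros m Hm. unfold Hterm. assert (P := INR_pos1 m Hm).
  assert (/ (INR m + b) <= / (INR m + a)) by (apply Rinv_le_contravar; lra). lra.
Qed.

Lemma Hm2_mono a b : 0 <= a <= b -> Hm 2 a <= Hm 2 b.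
Proof.
  intro Hab. apply (cvs_mono (H2term a) (H2term b)); try apply Hm2_cvs; try lra.
  intros m Hm. unfold H2term. assert (P := INR_pos1 m Hm).
  assert (/ (INR m + b)^2 <= / (INR m + a)^2) by (apply Rinv_le_contravar; nra). lra.
Qed.

Lemma H0 : H 0 = 0.
Proof.
  apply (lim_uniq (fun M => fsum1 M (Hterm 0))). apply H_cvs; lra.
  eapply is_lim_seq_ext; [|apply is_lim_seq_const]. intro n. induction n; simpl; auto.
  rewrite <- IHn. unfold Hterm. rewrite Rplus_0_r. ring.
Qed.

Lemma Hm2_0 : Hm 2 0 = 0.
Proof.
  apply (lim_uniq (fun M => fsum1 M (H2term 0))). apply Hm2_cvs; lra.
  eapply is_lim_seq_ext; [|apply is_lim_seq_const]. intro n. induction n; simpl; auto.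
  rewrite <- IHn. unfold H2term. rewrite Rplus_0_r. ring.
Qed.

Lemma qstep n : / (INR n + 1) <= 4 * (sqrt (sqrt (INR n + 1)) - sqrt (sqrt (INR n))).
Proof.
  assert (P := pos_INR n). set (x := INR n) in *.
  assert (Ea : sqrt (sqrt (x+1)) * sqrt (sqrt (x+1)) = sqrt (x+1)) by (apply sqrt_sqrt, sqrt_pos).
  assert (Ea' : sqrt (x+1) * sqrt (x+1) = x+1) by (apply sqrt_sqrt; lra).
  assert (Eb : sqrt (sqrt x) * sqrt (sqrt x) = sqrt x) by (apply sqrt_sqrt, sqrt_pos).
  assert (Eb' : sqrt x * sqrt x = x) by (apply sqrt_sqrt; lra).
  assert (A1 : 1 <= sqrt (x+1)) by (apply Rle_trans with (sqrt 1); [rewrite sqrt_1; lra | apply sqrt_le_1_alt; lra]).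
  assert (A2 : 1 <= sqrt (sqrt (x+1))) by (apply Rle_trans with (sqrt 1); [rewrite sqrt_1; lra | apply sqrt_le_1_alt; lra]).
  assert (B1 : sqrt x <= sqrt (x+1)) by (apply sqrt_le_1_alt; lra).
  assert (B2 : sqrt (sqrt x) <= sqrt (sqrt (x+1))) by (apply sqrt_le_1_alt; lra).
  assert (B0 : 0 <= sqrt (sqrt x)) by apply sqrt_pos.
  set (a := sqrt (sqrt (x+1))) in *. set (b := sqrt (sqrt x)) in *.
  set (s := sqrt (x+1)) in *. set (t := sqrt x) in *.
  assert (F : (a - b) * ((a+b)*(s + t)) = 1).
  { replace ((a - b) * ((a+b)*(s + t))) with ((a*a - b*b)*(s+t)) by ring. rewrite Ea, Eb.
    replace ((s - t) * (s + t)) with (s*s - t*t) by ring. lra. }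
  assert (G1 : a <= s) by nra.
  assert (G : (a+b)*(s+t) <= 4 * (x+1)).
  { apply Rle_trans with ((2*a)*(2*s)). apply Rmult_le_compat; nra. nra. }
  apply (Rmult_le_reg_r (x+1)); [lra|]. rewrite Rinv_l by lra. nra.
Qed.

Lemma H_nat n : H (INR n) <= 4 * sqrt (sqrt (INR n)).
Proof.
  induction n. simpl. rewrite H0, sqrt_0, sqrt_0. lra.
  rewrite S_INR, H_shift by apply pos_INR. assert (Q := qstep n). lra.
Qed.

Lemma H_bound z : 0 <= z -> H z * H z <= 16 * sqrt (z + 1).
Proof.
  intro Hz. destruct (archimed z) as [A1 A2].
  assert (Hu : (0 <= up z)%Z) by (apply le_IZR; lra).
  set (n := Z.to_nat (up z)).
  assert (En : INR n = IZR (up z)) by (unfold n; rewrite INR_IZR_INZ, Z2Nat.id; auto).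
  assert (Hle : H z <= H (INR n)) by (apply H_mono; lra).
  assert (Hn := H_nat n). assert (Hg := H_ge0 z Hz).
  assert (sqrt (sqrt (INR n)) <= sqrt (sqrt (z+1))) by (apply sqrt_le_1_alt, sqrt_le_1_alt; lra).
  assert (E2 : sqrt (sqrt (z+1)) * sqrt (sqrt (z+1)) = sqrt (z+1)) by (apply sqrt_sqrt, sqrt_pos).
  assert (0 <= sqrt (sqrt (INR n))) by apply sqrt_pos.
  nra.
Qed.

Lemma lim_sqrt_inv c : 0 < c -> is_lim_seq (fun M => / sqrt (INR M + c)) 0.
Proof.
  intro Hc. assert (Rbar_inv p_infty = 0) by reflexivity.
  rewrite <- H. apply is_lim_seq_inv; [|discriminate].
  apply is_lim_seq_spec. intro K.
  destruct (INR_archimed 1 (K*K)) as [N HN]; [lra|].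
  exists N. intros n Hn. apply le_INR in Hn.
  destruct (Rle_or_lt K 0). { assert (0 < sqrt (INR n + c)) by (apply sqrt_lt_R0; assert (0 <= INR n) by apply pos_INR; lra). lra. }
  rewrite <- (sqrt_square K) by lra. apply sqrt_lt_1_alt. split; nra.
Qed.

Lemma lim_H2_over c : 0 < c -> is_lim_seq (fun M => H (INR M + c) ^ 2 / (INR M + c)) 0.
Proof.
  intro Hc. apply is_lim_seq_incr_1.
  apply (is_lim_seq_le_le (fun _ => 0) _ (fun M => 16 * sqrt 2 * / sqrt (INR (S M) + c))).
  - intro M. assert (P : 1 <= INR (S M)) by (apply INR_S1; lia). assert (Pt : 1 <= INR (S M) + c) by lra. set (t := INR (S M) + c) in *.
    assert (Hb := H_bound t ltac:(lra)).
    assert (S1 : sqrt (t+1) <= sqrt 2 * sqrt t).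
    { rewrite <- sqrt_mult by lra. apply sqrt_le_1_alt; nra. }
    assert (St : 0 < sqrt t) by (apply sqrt_lt_R0; lra).
    assert (Et : sqrt t * sqrt t = t) by (apply sqrt_sqrt; lra).
    split.
    + apply Rdiv_le_0_compat; [apply pow2_ge_0|lra].
    + unfold Rdiv. replace (H t ^ 2) with (H t * H t) by ring.
      apply (Rmult_le_reg_r t); [lra|]. rewrite Rmult_assoc, Rinv_l by lra.
      replace (16 * sqrt 2 * / sqrt t * t) with (16 * (sqrt 2 * sqrt t)).
      nra. set (u := sqrt t) in *. rewrite <- Et. field. lra.
  - apply is_lim_seq_const.
  - replace (Finite 0) with (Rbar_mult (16 * sqrt 2) 0) by (simpl; f_equal; ring).
    apply is_lim_seq_scal_l. apply (is_lim_seq_incr_1 (fun M => / sqrt (INR M + c))).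
    apply lim_sqrt_inv; auto.
Qed.

Lemma lim_H_over c : 0 < c -> is_lim_seq (fun M => H (INR M + c) / (INR M + c)) 0.
Proof.
  intro Hc.
  apply (is_lim_seq_le_le (fun _ => 0) _ (fun M => / (INR M + c) + H (INR M + c) ^ 2 / (INR M + c))).
  - intro M. assert (P := pos_INR M). assert (Hg := H_ge0 (INR M + c) ltac:(lra)).
    split. apply Rdiv_le_0_compat; lra.
    unfold Rdiv. assert (Pi : 0 < / (INR M + c)) by (apply Rinv_0_lt_compat; lra).
    assert (Hq : H (INR M + c) <= 1 + H (INR M + c) ^ 2) by nra. nra.
  - apply is_lim_seq_const.
  - replace (Finite 0) with (Finite (0 + 0)) by (f_equal; ring).
    apply is_lim_seq_plus'. apply lim_inv_lin; auto. apply lim_H2_over; auto.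
Qed.

Definition Qterm x m := H (INR m + x) * Hterm x m.
Definition Wterm x m := H (INR m + x) ^ 2 * Hterm x m.
Definition Q x := series (fun k => Qterm x (S k)).
Definition W x := series (fun k => Wterm x (S k)).

Lemma W_ex x : 0 <= x -> exists l, cvs (Wterm x) l.
Proof.
  intro Hx. apply (cvs_comp (Wterm x) (fun m => / (INR m * sqrt (INR m))) (16 * x * sqrt (x + 2)) 3).
  - assert (0 <= sqrt (x+2)) by apply sqrt_pos. apply Rmult_le_pos; [lra|auto].
  - intros m Hm. unfold Wterm. apply Rmult_le_pos. apply pow2_ge_0. apply Hterm_bd; auto.
  - intros m Hm. unfold Wterm. assert (P := INR_S1 m Hm). set (t := INR m) in *.
    assert (Hb := H_bound (t + x) ltac:(lra)).
    assert (Ht := Hterm_bd x m Hx Hm). fold t in Ht.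
    assert (S1 : sqrt (t + x + 1) <= sqrt (x+2) * sqrt t).
    { rewrite <- sqrt_mult by lra. apply sqrt_le_1_alt; nra. }
    assert (St : 0 < sqrt t) by (apply sqrt_lt_R0; lra).
    assert (Et : sqrt t * sqrt t = t) by (apply sqrt_sqrt; lra).
    replace (H (t + x) ^ 2) with (H (t+x) * H (t+x)) by ring.
    apply Rle_trans with (16 * (sqrt (x+2) * sqrt t) * (x * / t ^ 2)).
    + apply Rmult_le_compat. nra. apply Ht. nra. apply Ht.
    + right. set (u := sqrt t) in *. rewrite <- Et. field. lra.
  - intro; apply sum_inv_32.
Qed.

Lemma W_cvs x : 0 <= x -> cvs (Wterm x) (W x).
Proof.
  intro Hx. destruct (W_ex x Hx) as [l Hl]. unfold W. rewrite (series_eq _ l); auto.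
  apply (cvs_inf (Wterm x)); auto.
Qed.

Lemma Q_cvs x : 0 <= x -> cvs (Qterm x) (Q x).
Proof.
  intro Hx. destruct (cvs_bounded (Qterm x) (H x + W x)) as [l Hl].
  - intros m Hm. unfold Qterm. apply Rmult_le_pos. apply H_ge0. assert (0 <= INR m) by apply pos_INR. lra.
    apply Hterm_bd; auto.
  - intro n. apply Rle_trans with (fsum1 n (Hterm x) + fsum1 n (Wterm x)).
    + induction n; simpl; [lra|]. enough (Qterm x (S n) <= Hterm x (S n) + Wterm x (S n)) by lra.
      unfold Qterm, Wterm. assert (Ht := Hterm_bd x (S n) Hx ltac:(lia)).
      assert (Hg := H_ge0 (INR (S n) + x) ltac:(assert (0 <= INR (S n)) by apply pos_INR; lra)).
      set (h := H (INR (S n) + x)) in *. assert (h <= 1 + h^2) by nra. nra.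
    + apply Rplus_le_compat; apply cvs_le_lim.
      intros; apply Hterm_bd; auto. apply H_cvs; auto.
      intros m Hm; unfold Wterm; apply Rmult_le_pos; [apply pow2_ge_0|apply Hterm_bd; auto]. apply W_cvs; auto.
  - unfold Q. rewrite (series_eq _ l); auto. apply (cvs_inf (Qterm x)); auto.
Qed.

Lemma H_shiftm M y : 0 <= y -> H (INR (S M) + y) = H (INR M + y) + / (INR (S M) + y).
Proof.
  intro Hy. assert (0 <= INR M) by apply pos_INR.
  replace (INR (S M) + y) with (INR M + y + 1) by (rewrite S_INR; ring).
  apply H_shift. lra.
Qed.

Lemma Q_shift x : 0 <= x -> Q (x + 1) - Q x = 2 * H (x + 1) / (x + 1).
Proof.
  intro Hx. set (y := x + 1).
  assert (E : forall M, fsum1 M (Qterm y) - fsum1 M (Qterm x) =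
     / y * fsum1 M (Hterm y) - H (INR M + y) / (INR M + y) + H y / y).
  { induction M.
    - simpl. rewrite Rplus_0_l. field. unfold y; lra.
    - rewrite !fsum1_S. 
      replace (fsum1 M (Qterm y) + Qterm y (S M) - (fsum1 M (Qterm x) + Qterm x (S M)))
        with ((fsum1 M (Qterm y) - fsum1 M (Qterm x)) + (Qterm y (S M) - Qterm x (S M))) by ring.
      rewrite IHM. unfold Qterm, Hterm.
      assert (Ex : INR (S M) + x = INR M + y) by (unfold y; rewrite S_INR; ring).
      rewrite Ex. rewrite (H_shiftm M y) by (unfold y; lra).
      assert (0 <= INR M) by apply pos_INR. rewrite S_INR.
      unfold y. field. repeat split; lra. }
  apply (lim_uniq (fun M => fsum1 M (Qterm y) - fsum1 M (Qterm x))).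
  - apply is_lim_seq_minus'; apply Q_cvs; unfold y; lra.
  - eapply is_lim_seq_ext. intro M; symmetry; apply E.
    replace (2 * H y / y) with (/ y * H y - 0 + H y / y) by (field; unfold y; lra).
    apply is_lim_seq_plus'; [|apply is_lim_seq_const].
    apply is_lim_seq_minus'. apply (is_lim_seq_scal_l _ (/ y) (H y)). apply H_cvs; unfold y; lra.
    apply lim_H_over; unfold y; lra.
Qed.

Definition G x := H x ^ 2 + Hm 2 x.

Lemma G_shift x : 0 <= x -> G (x + 1) - G x = 2 * H (x + 1) / (x + 1).
Proof.
  intro Hx. unfold G. rewrite (H_shift x Hx), (Hm2_shift x Hx). field. lra.
Qed.

Lemma F_shift x : 0 <= x -> Q (x + 1) - G (x + 1) = Q x - G x.
Proof. intro Hx. assert (A := Q_shift x Hx). assert (B := G_shift x Hx). lra. Qed.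

Lemma Q0 : Q 0 = 0.
Proof.
  apply (lim_uniq (fun M => fsum1 M (Qterm 0))). apply Q_cvs; lra.
  eapply is_lim_seq_ext; [|apply is_lim_seq_const]. intro n. induction n; simpl; auto.
  rewrite <- IHn. unfold Qterm, Hterm. rewrite Rplus_0_r. ring.
Qed.

Lemma F_nshift x n : 0 <= x -> Q (x + INR n) - G (x + INR n) = Q x - G x.
Proof.
  intro Hx. induction n. simpl. rewrite Rplus_0_r; auto.
  rewrite S_INR. replace (x + (INR n + 1)) with ((x + INR n) + 1) by ring.
  rewrite F_shift; auto. assert (0 <= INR n) by apply pos_INR. lra.
Qed.

Lemma F_nat n : Q (INR n) - G (INR n) = 0.
Proof.
  replace (INR n) with (0 + INR n) by ring. rewrite F_nshift by lra.
  rewrite Q0. unfold G. rewrite H0, Hm2_0. ring.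
Qed.

Lemma Q_mono a b : 0 <= a <= b -> Q a <= Q b.
Proof.
  intro Hab. apply (cvs_mono (Qterm a) (Qterm b)); try apply Q_cvs; try lra.
  intros m Hm. unfold Qterm. assert (P := INR_pos1 m Hm).
  assert (A := Hterm_bd a m ltac:(lra) Hm). assert (B := Hterm_bd b m ltac:(lra) Hm).
  assert (C : Hterm a m <= Hterm b m).
  { unfold Hterm. assert (/ (INR m + b) <= / (INR m + a)) by (apply Rinv_le_contravar; lra). lra. }
  assert (D : H (INR m + a) <= H (INR m + b)) by (apply H_mono; lra).
  assert (E := H_ge0 (INR m + a) ltac:(lra)).
  apply Rmult_le_compat; lra.
Qed.

Lemma G_mono a b : 0 <= a <= b -> G a <= G b.
Proof.
  intro Hab. unfold G. assert (A := H_mono a b Hab). assert (B := Hm2_mono a b Hab).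
  assert (C := H_ge0 a ltac:(lra)). nra.
Qed.

Lemma Q_closed x : 0 <= x -> Q x = H x ^ 2 + Hm 2 x.
Proof.
  intro Hx. fold (G x). enough (Q x - G x = 0) by lra.
  destruct (archimed x) as [A1 A2].
  assert (Hu : (0 <= up x)%Z) by (apply le_IZR; lra).
  set (n := Z.to_nat (up x)).
  assert (En : INR n = IZR (up x)) by (unfold n; rewrite INR_IZR_INZ, Z2Nat.id; auto).
  destruct n as [|p] eqn:Hn. { simpl in En. lra. }
  assert (Ep : INR (S p) = INR p + 1) by apply S_INR.
  set (F := Q x - G x).
  assert (B : forall N, Rabs F <= 2 * H (INR N + (INR p + 1)) / (INR N + (INR p + 1))).
  { intro N. assert (PN := pos_INR N). assert (Pp := pos_INR p).
    assert (E1 : F = Q (x + INR N) - G (x + INR N)) by (unfold F; rewrite F_nshift; auto).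
    assert (E2 := F_nat (N + p)). assert (E3 := F_nat (N + S p)).
    rewrite plus_INR in E2, E3. rewrite Ep in E3.
    assert (Gs := G_shift (INR N + INR p) ltac:(lra)).
    replace (INR N + INR p + 1) with (INR N + (INR p + 1)) in Gs by ring.
    replace (INR N + (INR p + 1)) with (INR N + (INR p + 1)) in E3 by ring.
    assert (M1 := Q_mono (x + INR N) (INR N + (INR p + 1)) ltac:(lra)).
    assert (M2 := Q_mono (INR N + INR p) (x + INR N) ltac:(lra)).
    assert (M3 := G_mono (x + INR N) (INR N + (INR p + 1)) ltac:(lra)).
    assert (M4 := G_mono (INR N + INR p) (x + INR N) ltac:(lra)).
    apply Rabs_le. lra. }
  assert (Hl := lim_H_over (INR p + 1) ltac:(assert (0 <= INR p) by apply pos_INR; lra)).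
  assert (L : Rabs F <= 0).
  { apply (lim_le (fun _ => Rabs F) (fun N => 2 * (H (INR N + (INR p + 1)) / (INR N + (INR p + 1))))).
    intro N. specialize (B N). unfold Rdiv in *. lra.
    apply is_lim_seq_const.
    replace 0 with (2 * 0) by ring. apply (is_lim_seq_scal_l _ 2 0). exact Hl. }
  assert (0 <= Rabs F) by apply Rabs_pos.
  destruct (Rcase_abs F); [rewrite Rabs_left in L|rewrite Rabs_right in L]; lra.
Qed.

Definition hh z := H z ^ 3 + H z * Hm 2 z + H z * zeta 2.

Lemma W_shift x : 0 <= x -> W (x + 1) - W x = hh (x + 1) - hh x + H (x + 1) / (x + 1) ^ 2.
Proof.
  intro Hx. set (y := x + 1).
  set (Z := fun M => fsum1 M (fun m => / INR m ^ 2) - fsum1 M (H2term y)).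
  assert (E : forall M, fsum1 M (Wterm y) - fsum1 M (Wterm x) =
     2 / y * fsum1 M (Qterm x) + 2 / y * (H y / y - H (INR M + y) / (INR M + y) + Z M)
     + / y ^ 2 * fsum1 M (Hterm y) - / y * Z M - H (INR M + y) ^ 2 / (INR M + y) + H y ^ 2 / y).
  { induction M.
    - unfold Z. simpl. rewrite Rplus_0_l. field. unfold y; lra.
    - unfold Z in *. rewrite !fsum1_S. 
      replace (fsum1 M (Wterm y) + Wterm y (S M) - (fsum1 M (Wterm x) + Wterm x (S M)))
        with ((fsum1 M (Wterm y) - fsum1 M (Wterm x)) + (Wterm y (S M) - Wterm x (S M))) by ring.
      rewrite IHM. unfold Wterm, Qterm, Hterm, H2term.
      assert (Ex : INR (S M) + x = INR M + y) by (unfold y; rewrite S_INR; ring).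
      rewrite Ex. rewrite (H_shiftm M y) by (unfold y; lra).
      assert (0 <= INR M) by apply pos_INR. rewrite S_INR.
      unfold y. field. repeat split; lra. }
  assert (Hy : 0 < y) by (unfold y; lra).
  assert (LZ : is_lim_seq Z (zeta 2 - Hm 2 y)).
  { apply is_lim_seq_minus'. apply zeta2_cvs. apply Hm2_cvs; lra. }
  assert (L : W y - W x = 2 / y * Q x + 2 / y * (H y / y - 0 + (zeta 2 - Hm 2 y))
     + / y ^ 2 * H y - / y * (zeta 2 - Hm 2 y) - 0 + H y ^ 2 / y).
  { apply (lim_uniq (fun M => fsum1 M (Wterm y) - fsum1 M (Wterm x))).
    - apply is_lim_seq_minus'; apply W_cvs; lra.
    - eapply is_lim_seq_ext. intro M; symmetry; apply E.
      apply is_lim_seq_plus'; [|apply is_lim_seq_const].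
      apply is_lim_seq_minus'; [|apply lim_H2_over; lra].
      apply is_lim_seq_minus'.
      2: apply (is_lim_seq_scal_l _ (/ y) (zeta 2 - Hm 2 y)); exact LZ.
      apply is_lim_seq_plus'.
      2: apply (is_lim_seq_scal_l _ (/ y ^ 2) (H y)); apply H_cvs; lra.
      apply is_lim_seq_plus'.
      apply (is_lim_seq_scal_l _ (2 / y) (Q x)); apply Q_cvs; lra.
      apply (is_lim_seq_scal_l _ (2 / y) (H y / y - 0 + (zeta 2 - Hm 2 y))).
      apply is_lim_seq_plus'; [|exact LZ].
      apply is_lim_seq_minus'; [apply is_lim_seq_const|apply lim_H_over; lra]. }
  rewrite L. rewrite (Q_closed x Hx). unfold hh. unfold y.
  rewrite (H_shift x Hx), (Hm2_shift x Hx). field. lra.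
Qed.

Lemma W_tele g d : 0 <= g -> W (g + INR d) - W g = hh (g + INR d) - hh g
   + fsum1 d (fun j => H (g + INR j) / (g + INR j) ^ 2).
Proof.
  intro Hg. induction d.
  - simpl. rewrite Rplus_0_r. ring.
  - rewrite fsum1_S, S_INR. replace (g + (INR d + 1)) with ((g + INR d) + 1) by ring.
    assert (0 <= INR d) by apply pos_INR.
    assert (A := W_shift (g + INR d) ltac:(lra)). lra.
Qed.

Theorem corollary2p8 (r k : nat) (alpha : R)
  (hrk : (r < k)%nat) (hka : INR k < alpha) :
  infinite_sum
    (fun n => (H (INR (S n) + alpha)) ^ 2 /
              ((INR (S n) + INR r) * (INR (S n) + INR k)))
    (/ (INR k - INR r) *
      ( (H (alpha - INR r)) ^ 3
        + H (alpha - INR r) * Hm 2 (alpha - INR r)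
        + H (alpha - INR r) * zeta 2
        - (H (alpha - INR k)) ^ 3
        - H (alpha - INR k) * Hm 2 (alpha - INR k)
        - H (alpha - INR k) * zeta 2
        + (INR r - alpha) *
            fsum1 r (fun j => (H (alpha + INR j - INR r)) ^ 2 /
                              (INR j * (alpha + INR j - INR r)))
        + fsum1 (k - r) (fun j => H (alpha + INR j - INR k) /
                                  (alpha + INR j - INR k) ^ 2)
        - (INR k - alpha) *
            fsum1 k (fun j => (H (alpha + INR j - INR k)) ^ 2 /
                              (INR j * (alpha + INR j - INR k))) )).
Proof.
  set (b := alpha - INR r). set (c := alpha - INR k).
  assert (Hrk : INR r < INR k) by (apply lt_INR; auto).
  assert (Pr := pos_INR r).
  assert (Hc : 0 < c) by (unfold c; lra). assert (Hb : 0 < b) by (unfold b; lra).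
  set (g := fun m => H (INR m + alpha) ^ 2 / ((INR m + INR r) * (INR m + INR k))).
  assert (E : forall n, (INR k - INR r) * fsum1 n g =
     fsum1 (n + r) (Wterm b) - fsum1 (n + k) (Wterm c) + fsum1 k (Wterm c) - fsum1 r (Wterm b)).
  { induction n. simpl. ring.
    rewrite !Nat.add_succ_l, !fsum1_S. 
    replace ((INR k - INR r) * (fsum1 n g + g (S n))) with ((INR k - INR r) * fsum1 n g + (INR k - INR r) * g (S n)) by ring.
    rewrite IHn. unfold Wterm, Hterm, g.
    replace (INR (S (n + r)) + b) with (INR (S n) + alpha) by (unfold b; rewrite !S_INR, plus_INR; ring).
    replace (INR (S (n + k)) + c) with (INR (S n) + alpha) by (unfold c; rewrite !S_INR, plus_INR; ring).
    rewrite ?S_INR, ?plus_INR. assert (0 <= INR n) by apply pos_INR.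
    unfold b, c. field. repeat split; lra. }
  assert (Hkr : INR k - INR r <> 0) by lra.
  set (L0 := (W b - W c + fsum1 k (Wterm c) - fsum1 r (Wterm b)) / (INR k - INR r)).
  assert (Hcv : cvs g L0).
  { unfold cvs. apply (is_lim_seq_ext (fun n => / (INR k - INR r) * (fsum1 (n + r) (Wterm b) - fsum1 (n + k) (Wterm c) + fsum1 k (Wterm c) - fsum1 r (Wterm b)))).
    { intro n. rewrite <- E. field. auto. }
    unfold L0. unfold Rdiv. rewrite Rmult_comm.
    apply (is_lim_seq_scal_l _ (/ (INR k - INR r)) (W b - W c + fsum1 k (Wterm c) - fsum1 r (Wterm b))).
    apply is_lim_seq_minus'; [|apply is_lim_seq_const].
    apply is_lim_seq_plus'; [|apply is_lim_seq_const].
    apply is_lim_seq_minus'.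
    - apply (is_lim_seq_incr_n (fun n => fsum1 n (Wterm b))). apply W_cvs; lra.
    - apply (is_lim_seq_incr_n (fun n => fsum1 n (Wterm c))). apply W_cvs; lra. }
  match goal with |- infinite_sum _ ?R => enough (Eq : L0 = R) end.
  { rewrite <- Eq. apply (cvs_inf g). exact Hcv. }
  assert (Eb : b = c + INR (k - r)) by (unfold b, c; rewrite minus_INR by lia; ring).
  assert (T := W_tele c (k - r) ltac:(lra)). rewrite <- Eb in T.
  assert (S1 : fsum1 r (Wterm b) = - (INR r - alpha) * fsum1 r (fun j => (H (alpha + INR j - INR r)) ^ 2 /
                              (INR j * (alpha + INR j - INR r)))).
  { rewrite <- fsum1_scal. apply fsum1_ext. intros j Hj. unfold Wterm, Hterm.
    assert (Pj := INR_pos1 j Hj).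
    replace (INR j + b) with (alpha + INR j - INR r) by (unfold b; ring).
    field. split; lra. }
  assert (S2 : fsum1 k (Wterm c) = - (INR k - alpha) * fsum1 k (fun j => (H (alpha + INR j - INR k)) ^ 2 /
                              (INR j * (alpha + INR j - INR k)))).
  { rewrite <- fsum1_scal. apply fsum1_ext. intros j Hj. unfold Wterm, Hterm.
    assert (Pj := INR_pos1 j Hj).
    replace (INR j + c) with (alpha + INR j - INR k) by (unfold c; ring).
    field. split; lra. }
  assert (S3 : fsum1 (k - r) (fun j => H (alpha + INR j - INR k) / (alpha + INR j - INR k) ^ 2)
     = fsum1 (k - r) (fun j => H (c + INR j) / (c + INR j) ^ 2)).
  { apply fsum1_ext. intros j Hj. replace (alpha + INR j - INR k) with (c + INR j) by (unfold c; ring). reflexivity. }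
  rewrite S3. unfold L0. rewrite S1, S2.
  assert (Tw : W b - W c = hh b - hh c + fsum1 (k - r) (fun j => H (c + INR j) / (c + INR j) ^ 2)) by lra.
  rewrite Tw. unfold hh. field. auto.
Qed.
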